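(* Let $\varphi\colon G\to G$ be an endomorphism of an abelian group $G$. If $S\leq G$ is a positive generator for $\varphi$, then $h_{\mathrm{alg}}(\varphi)=h_{\mathrm{alg}}(\varphi,S)$. Likewise, if $\varphi$ is an automorphism and $S\leq G$ is a generator for $\varphi$, then $h_{\mathrm{alg}}(\varphi)=h_{\mathrm{alg}}(\varphi,S)$. In particular, every positively expansive endomorphism and every expansive automorphism has finite algebraic entropy.
   Context: $\mathbb N=\{0,1,2,\dots\}$. A finite subgroup $S\leq G$ is a positive generator for an endomorphism $\varphi$ if for every finite subgroup $F\leq G$ there is $n\in\mathbb N$ with $F\subseteq\sum_{k=0}^n\varphi^kS$; $\varphi$ is positively expansive if it has a positive generator. For an automorphism $\varphi$, a finite subgroup $S$ is a generator if for every finite subgroup $F\leq G$ there is $n\in\mathbb N$ with $F\subseteq\sum_{|k|\leq n}\varphi^kS$; $\varphi$ is expansive if it has a generator. For a finite subgroup $F\leq G$, $h_{\mathrm{alg}}(\varphi,F)=\limsup_{n}\frac1n\log\bigl|\sum_{k=0}^{n-1}\varphi^kF\bigr|$, and $h_{\mathrm{alg}}(\varphi)=\sup_F h_{\mathrm{alg}}(\varphi,F)$, the supremum over all finite subgroups $F\leq G$. *)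

(* Defs.v *)
From HB Require Import structures.
From mathcomp Require Import all_boot all_order all_algebra.
From mathcomp Require Import finmap.
From mathcomp Require Import all_classical all_reals all_analysis.
Set Implicit Arguments. Unset Strict Implicit. Unset Printing Implicit Defensive.
Import Order.TTheory GRing.Theory Num.Theory.
Local Open Scope classical_set_scope.
Local Open Scope ring_scope.
Local Open Scope ereal_scope.
Local Open Scope ring_scope.

Section Defs.
Variable G : zmodType.

Definition fin_subgroup (F : set G) : Prop :=
  finite_set F /\ F 0 /\ (forall x y, F x -> F y -> F (x - y)).

Definition traj (phi : G -> G) (F : set G) (n : nat) : set G :=
  [set x | exists f : nat -> G,
     (forall k, (k < n)%N -> (iter k phi @` F) (f k)) /\
     x = \sum_(k < n) f k].

(* sum_{|k| <= n} phi^k S for a bijective phi; phi^(-k) S is the preimage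
   of S under phi^k *)
Definition traj2 (phi : G -> G) (S : set G) (n : nat) : set G :=
  [set x | exists f g : nat -> G,
     (forall k, (k <= n)%N -> (iter k phi @` S) (f k)) /\
     (forall k, (1 <= k <= n)%N -> (iter k phi @^-1` S) (g k)) /\
     x = \sum_(k < n.+1) f k + \sum_(1 <= k < n.+1) g k].

Definition positive_generator (phi : G -> G) (S : set G) : Prop :=
  fin_subgroup S /\
  forall F, fin_subgroup F -> exists n : nat, F `<=` traj phi S n.+1.

Definition positively_expansive (phi : G -> G) : Prop :=
  exists S, positive_generator phi S.

Definition generator (phi : G -> G) (S : set G) : Prop :=
  fin_subgroup S /\
  forall F, fin_subgroup F -> exists n : nat, F `<=` traj2 phi S n.

Definition expansive (phi : G -> G) : Prop := exists S, generator phi S.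

Variable R : realType.

Definition halgF (phi : G -> G) (F : set G) : \bar R :=
  limn_esup (fun n : nat =>
    ((ln ((#|` fset_set (traj phi F n)|)%fset%:R : R)) / n%:R)%:E).

Definition halg (phi : G -> G) : \bar R :=
  ereal_sup [set halgF phi F | F in fin_subgroup].

End Defs.

(* Main.v *)
Require Import Defs.
From HB Require Import structures.
From mathcomp Require Import all_boot all_order all_algebra.
From mathcomp Require Import finmap.
From mathcomp Require Import all_classical all_reals all_analysis.
From mathcomp Require Import zify ring lra.
Import Order.TTheory GRing.Theory Num.Theory.
Local Open Scope classical_set_scope.
Local Open Scope ring_scope.

Section Alg.
Variables (G : zmodType) (phi : {additive G -> G}).

Lemma iterB k (x y : G) : iter k phi (x - y) = iter k phi x - iter k phi y.
Proof. by elim: k => //= k ->; rewrite raddfB. Qed.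

Lemma iter0 k : iter k phi 0 = 0.
Proof. by elim: k => //= k ->; rewrite raddf0. Qed.

Lemma iterDr k (x y : G) : iter k phi (x + y) = iter k phi x + iter k phi y.
Proof. by elim: k => //= k ->; rewrite raddfD. Qed.

Lemma iter_sum k I (r : seq I) (P : pred I) (F : I -> G) :
  iter k phi (\sum_(i <- r | P i) F i) = \sum_(i <- r | P i) iter k phi (F i).
Proof. exact: (big_morph (iter k phi) (iterDr k) (iter0 k)). Qed.

Section WithS.
Variable S : set G.
Hypothesis hS : fin_subgroup S.

Lemma S0 : S 0. Proof. by case: hS => _ []. Qed.
Lemma SB x y : S x -> S y -> S (x - y). Proof. by case: hS => _ [] _; apply. Qed.
Lemma SD x y : S x -> S y -> S (x + y).
Proof.
move=> Sx Sy; rewrite -[y]opprK -[- y]sub0r; apply: SB => //; exact: SB S0 Sy.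
Qed.

Lemma traj0 n : traj phi S n 0.
Proof.
exists (fun _ => 0); split; last by rewrite big1.
by move=> k _; exists 0; [exact: S0| exact: iter0].
Qed.

Lemma trajD n x y : traj phi S n x -> traj phi S n y -> traj phi S n (x + y).
Proof.
move=> [f [hf ->]] [g [hg ->]]; exists (fun k => f k + g k); split; last first.
  by rewrite big_split.
move=> k kn; have [a Sa <-] := hf k kn; have [b Sb <-] := hg k kn.
by exists (a + b); [exact: SD | exact: iterDr].
Qed.

Lemma traj_sum n I (r : seq I) (P : pred I) (F : I -> G) :
  (forall i, P i -> traj phi S n (F i)) -> traj phi S n (\sum_(i <- r | P i) F i).
Proof. by move=> h; apply: big_ind => //; [exact: traj0 | exact: trajD]. Qed.

Lemma traj_mono a b x : (a <= b)%N -> traj phi S a x -> traj phi S b x.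
Proof.
move=> ab [f [hf ->]]; exists (fun k => if (k < a)%N then f k else 0); split.
  move=> k kb; case: ifP => ka; first exact: hf.
  by exists 0; [exact: S0 | exact: iter0].
rewrite (big_ord_widen _ _ ab) big_mkcond /=; apply: eq_bigr => i _.
by case: ifP.
Qed.

Lemma traj_S1 x : S x -> traj phi S 1 x.
Proof.
move=> Sx; exists (fun _ => x); split; last by rewrite big_ord1.
by move=> k; rewrite ltnS leqn0 => /eqP ->; exists x.
Qed.

Lemma traj_shift1 n x : traj phi S n x -> traj phi S n.+1 (phi x).
Proof.
move=> [f [hf ->]]; exists (fun l => if l is l'.+1 then phi (f l') else 0).
split.
  case=> [|k] kn; first by exists 0; [exact: S0 | by []].
  have [a Sa <-] := hf k kn; by exists a.
by rewrite big_ord_recl /= add0r raddf_sum.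
Qed.

Lemma traj_shift k n x : traj phi S n x -> traj phi S (k + n) (iter k phi x).
Proof.
move=> h; elim: k => [|k IH] //=; rewrite addSn; exact: traj_shift1.
Qed.

End WithS.
Arguments traj0 {S} hS n.
Arguments trajD {S} hS [n x y].
Arguments traj_sum {S} hS [n I r P F].
Arguments traj_mono {S} hS [a b x].
Arguments traj_S1 {S} [x].
Arguments traj_shift {S} hS k [n x].

Lemma pos_incl (S F : set G) m : fin_subgroup S -> F `<=` traj phi S m.+1 ->
  forall n, traj phi F n `<=` traj phi S (n + m).
Proof.
move=> hS hF n x [f [hf ->]]; apply: traj_sum => // i _.
have [y Fy <-] := hf i (ltn_ord i).
apply: (traj_mono hS _ (traj_shift hS i (hF y Fy))).
have := ltn_ord i; lia.
Qed.

Lemma traj2_incl (S : set G) m x : fin_subgroup S -> traj2 phi S m x ->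
  traj phi S (m + m).+1 (iter m phi x).
Proof.
move=> hS [f [g [hf [hg ->]]]]; rewrite iterDr !iter_sum.
rewrite [X in _ + X]big_nat_cond.
apply: trajD => //; apply: traj_sum => //.
  move=> i _; have [s Ss <-] := hf i (ltn_ord i); rewrite -iterD.
  apply: (traj_mono hS _ (traj_shift hS (m + i) (traj_S1 Ss))).
  have := ltn_ord i; lia.
move=> i /andP[/andP[i1 im] _].
have Sg : S (iter i phi (g i)) by apply: hg; rewrite i1 -ltnS im.
have -> : iter m phi (g i) = iter (m - i) phi (iter i phi (g i)).
  by rewrite -iterD subnK // -ltnS.
apply: (traj_mono hS _ (traj_shift hS (m - i) (traj_S1 Sg))).
lia.
Qed.

Lemma gen_incl (S F : set G) m : fin_subgroup S -> F `<=` traj2 phi S m ->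
  forall n, iter m phi @` traj phi F n `<=` traj phi S (n + (m + m)).
Proof.
move=> hS hF n _ [x [f [hf ->]] <-]; rewrite iter_sum; apply: traj_sum => // i _.
have [y Fy <-] := hf i (ltn_ord i).
have -> : iter m phi (iter i phi y) = iter i phi (iter m phi y).
  by rewrite -!iterD addnC.
apply: (traj_mono hS _ (traj_shift hS i (@traj2_incl S m y hS (hF y Fy)))).
have := ltn_ord i; lia.
Qed.

Lemma traj_fin (S : set G) n : fin_subgroup S ->
  finite_set (traj phi S n) /\
  (#|` fset_set (traj phi S n)| <= #|` fset_set S| ^ n)%N.
Proof.
move=> hS; have finS : finite_set S by case: hS.
pose fS := fset_set S.
pose h := fun t : {ffun 'I_n -> fS} => \sum_(k < n) iter k phi (val (t k)).
pose X := [fset x | x in map h (enum {ffun 'I_n -> fS})]%fset.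
have sub : traj phi S n `<=` [set` X].
  move=> x [f [hf ->]].
  have c := fun k : 'I_n => cid2 (hf k (ltn_ord k)).
  have mS : forall k : 'I_n, s2val (c k) \in fS.
    by move=> k; rewrite in_fset_set //; apply: mem_set; case: (c k).
  pose t := [ffun k => [` mS k]%fset] : {ffun 'I_n -> fS}.
  have -> : \sum_(k < n) f k = h t.
    rewrite /h; apply: eq_bigr => k _; rewrite ffunE /=.
    by case: (c k).
  rewrite /= /X; apply/imfsetP; exists (h t) => //.
  by apply/mapP; exists t => //; rewrite mem_enum.
have fin : finite_set (traj phi S n) by apply: sub_finite_set sub (finite_fset X).
split => //.
have : (fset_set (traj phi S n) `<=` X)%fset.
  by rewrite -[X in (_ `<=` X)%fset]set_fsetK -fset_set_sub // finite_fset.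
move/fsubset_leq_card/leq_trans; apply.
rewrite card_fseq (leq_trans (size_undup _)) // size_map -cardE card_ffun card_ord.
by rewrite -cardfE.
Qed.

Lemma card_gt0 (S : set G) n : fin_subgroup S ->
  (0 < #|` fset_set (traj phi S n)|)%N.
Proof.
move=> hS; have [fin _] := traj_fin S n hS.
rewrite cardfs_gt0; apply/fset0Pn; exists 0.
by rewrite in_fset_set //; apply: mem_set; exact: traj0.
Qed.

End Alg.
Lemma card_inj (T : choiceType) (A B : set T) (psi : T -> T) :
  finite_set A -> finite_set B -> injective psi -> psi @` A `<=` B ->
  (#|` fset_set A| <= #|` fset_set B|)%N.
Proof.
move=> fA fB ipsi sub.
have e : #|` (psi @` fset_set A)%fset| = #|` fset_set A| by rewrite card_imfset.
rewrite -e -fset_set_image //.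
apply: fsubset_leq_card; rewrite -fset_set_sub //; exact: finite_image.
Qed.
Section Key.
Variable R : realType.

Lemma limn_esupE (u : (\bar R)^nat) :
  limn_esup u = ereal_inf (range (esups u)).
Proof. by rewrite limn_esup_lim; apply: cvg_lim => //; exact: cvg_esups_inf. Qed.

Lemma key (x y : nat -> nat) (c : nat) (L : R) :
  (forall n, 0 < x n)%N -> (forall n, 0 < y n)%N ->
  (forall n, x n <= y (n + c))%N -> 0 <= L ->
  (forall n, ln (y n)%:R <= n%:R * L) ->
  (limn_esup (fun n => (ln ((x n)%:R : R) / n%:R)%:E) <=
   limn_esup (fun n => (ln ((y n)%:R : R) / n%:R)%:E))%E.
Proof.
move=> x0 y0 xy L0 yL.
set a := fun n => ln ((y n)%:R : R) / n%:R.
set b := fun n => ln ((x n)%:R : R) / n%:R.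
have lny0 n : 0 <= ln ((y n)%:R : R) by apply: ln_ge0; rewrite ler1n.
have a0 n : 0 <= a n by rewrite /a divr_ge0.
have aL n : a n <= L.
  case: n => [|n]; first by rewrite /a invr0 mulr0.
  by rewrite /a ler_pdivrMr ?ltr0n // mulrC.
rewrite !limn_esupE; apply/ereal_infP => _ [N _ <-].
apply/lee_addgt0Pr => e e0.
set s := esups _ N.
have sa : ((a N)%:E <= s)%E by apply: ereal_sup_ubound; exists N => /=.
have sL : (s <= L%:E)%E by apply/ereal_supP => _ [k _ <-]; rewrite lee_fin; exact: aL.
have sfin : s \is a fin_num.
  by rewrite fin_numElt (lt_le_trans _ sa) ?ltNyr // (le_lt_trans sL) ?ltry.
rewrite -(fineK sfin); set sig := fine s.
have as_ k : (N <= k)%N -> a k <= sig.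
  move=> Nk; rewrite -lee_fin /sig fineK //; apply: ereal_sup_ubound.
  by exists k.
pose K := (Num.truncn (c%:R * L / e)).+1.
have hK := truncnS_gt (c%:R * L / e).
pose N' := (N + K)%N.
apply: (@le_trans _ _ (esups (fun n => (b n)%:E) N')).
  by apply: ereal_inf_lbound; exists N'.
apply/ereal_supP => _ [n /= Nn <-]; rewrite -EFinD lee_fin.
have n0 : (0 < n)%N by rewrite /N' in Nn; lia.
have nK : (K <= n)%N by rewrite /N' in Nn; lia.
have nN : (N <= n + c)%N by rewrite /N' in Nn; lia.
rewrite /b ler_pdivrMr ?ltr0n //.
have h1 : ln ((x n)%:R : R) <= ln ((y (n + c))%:R : R).
  by rewrite ler_ln ?posrE ?ltr0n // ler_nat.
have h2 : ln ((y (n + c))%:R : R) = a (n + c) * (n + c)%:R.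
  by rewrite /a divfK // pnatr_eq0; lia.
have h3 := as_ _ nN.
have h4 := aL (n + c)%N.
have h5 : c%:R * L < n%:R * e.
  rewrite -ltr_pdivrMr //; apply: (lt_le_trans hK); rewrite ler_nat //.
have h6 := a0 (n + c)%N.
rewrite natrD in h2.
have cpos : 0 <= (c%:R : R) by [].
have npos : 0 <= (n%:R : R) by [].
nra.
Qed.

Lemma ub (y : nat -> nat) (L : R) : 0 <= L ->
  (forall n, ln ((y n)%:R : R) <= n%:R * L) ->
  (limn_esup (fun n => (ln ((y n)%:R : R) / n%:R)%:E) <= L%:E)%E.
Proof.
move=> L0 yL; rewrite limn_esupE; apply: (@le_trans _ _ (esups (fun n => (ln ((y n)%:R : R) / n%:R)%:E) 0)).
  by apply: ereal_inf_lbound; exists 0%N.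
apply/ereal_supP => _ [k _ <-]; rewrite lee_fin.
case: k => [|k]; first by rewrite invr0 mulr0.
by rewrite ler_pdivrMr ?ltr0n // mulrC.
Qed.

End Key.

Lemma halgF_le (R : realType) (G : zmodType) (phi : {additive G -> G})
  (S F : set G) (c : nat) (psi : G -> G) :
  fin_subgroup S -> fin_subgroup F -> injective psi ->
  (forall n, psi @` traj phi F n `<=` traj phi S (n + c)) ->
  (halgF R phi F <= halgF R phi S)%E.
Proof.
move=> hS hF ipsi hsub; rewrite /halgF.
have Sgt0 : (0 < #|` fset_set S|)%N.
  have finS : finite_set S by case: hS.
  rewrite cardfs_gt0; apply/fset0Pn; exists 0.
  by rewrite in_fset_set //; apply: mem_set; exact: S0.
apply: (@key R _ _ c (ln (#|` fset_set S|%:R : R))).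
- by move=> n; exact: card_gt0.
- by move=> n; exact: card_gt0.
- move=> n; have [fF _] := traj_fin _ phi F n hF; have [fS _] := traj_fin _ phi S (n + c) hS.
  exact: card_inj fF fS ipsi (hsub n).
- by apply: ln_ge0; rewrite ler1n.
- move=> n; have [_ hle] := traj_fin _ phi S n hS.
  rewrite mulr_natl -lnXn ?ltr0n // -natrX ler_ln ?posrE ?ltr0n ?expn_gt0 ?Sgt0 //.
    by rewrite ler_nat.
  exact: card_gt0.
Qed.

Lemma halgF_ub (R : realType) (G : zmodType) (phi : {additive G -> G}) (S : set G) :
  fin_subgroup S -> (halgF R phi S < +oo)%E.
Proof.
move=> hS.
have Sgt0 : (0 < #|` fset_set S|)%N.
  have finS : finite_set S by case: hS.
  rewrite cardfs_gt0; apply/fset0Pn; exists 0.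
  by rewrite in_fset_set //; apply: mem_set; exact: S0.
apply: (le_lt_trans (@ub R _ (ln (#|` fset_set S|%:R : R)) _ _)); last exact: ltry.
- by apply: ln_ge0; rewrite ler1n.
- move=> n; have [_ hle] := traj_fin _ phi S n hS.
  rewrite mulr_natl -lnXn ?ltr0n // -natrX ler_ln ?posrE ?ltr0n ?expn_gt0 ?Sgt0 //.
    by rewrite ler_nat.
  exact: card_gt0.
Qed.

Lemma halg_eq (R : realType) (G : zmodType) (phi : {additive G -> G}) (S : set G) :
  fin_subgroup S ->
  (forall F, fin_subgroup F -> (halgF R phi F <= halgF R phi S)%E) ->
  halg R phi = halgF R phi S.
Proof.
move=> hS h; apply/eqP; rewrite eq_le; apply/andP; split.
  by apply/ereal_supP => _ [F hF <-]; exact: h.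
by apply: ereal_sup_ubound; exists S.
Qed.

Lemma iter_inj (G : Type) (f : G -> G) k : injective f -> injective (iter k f).
Proof. by move=> fi; elim: k => [|k IH] //= x y /fi /IH. Qed.

Theorem theorem3p3 (R : realType) (G : zmodType) (phi : {additive G -> G}) :
  (forall S : set G, positive_generator phi S ->
     halg R phi = halgF R phi S) /\
  (bijective phi -> forall S : set G, generator phi S ->
     halg R phi = halgF R phi S) /\
  (positively_expansive phi -> (halg R phi < +oo)%E) /\
  (bijective phi -> expansive phi -> (halg R phi < +oo)%E).
Proof.
have P1 : forall S : set G, positive_generator phi S ->
     halg R phi = halgF R phi S.
  move=> S [hS hgen]; apply: halg_eq => // F hF.
  have [m hm] := hgen F hF.
  apply: (@halgF_le R G phi S F m id) => // n.
  by rewrite image_id; exact: pos_incl.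
have P2 : bijective phi -> forall S : set G, generator phi S ->
     halg R phi = halgF R phi S.
  move=> bij S [hS hgen]; apply: halg_eq => // F hF.
  have [m hm] := hgen F hF.
  apply: (@halgF_le R G phi S F (m + m) (iter m phi)) => //.
    exact/iter_inj/bij_inj.
  by move=> n; exact: gen_incl.
split => //; split => //; split.
  by move=> [S hS]; rewrite (P1 S hS); apply: halgF_ub; case: hS.
by move=> bij [S hS]; rewrite (P2 bij S hS); apply: halgF_ub; case: hS.
Qed.
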